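(* Let $k\ge 2$, let $\sim$ be an equivalence relation on $\{1,\dots,N\}^2$ satisfying condition (C2) with constant $B$, and assume $N\ge B$. Let $\pi$ be a partition of $\{1,\dots,k\}$ with $r$ blocks. Then $$\#\mathcal E^{(N)}_k(\pi)\le N^{r+1}\,B^{\,k-r-1}.$$
   Context: For $N\in\mathbb N$, let $\sim$ be an equivalence relation on $\{1,\dots,N\}^2$. Condition (C2): $\max_{p,q,r}\#\{s\in\{1,\dots,N\}:(p,q)\sim(r,s)\}\le B<\infty$, where $B$ does not depend on $N$. For a partition $\pi$ of $\{1,\dots,k\}$, let $\mathcal E^{(N)}_k(\pi)$ be the set of index sequences $i=(i_1,\dots,i_k)\in\{1,\dots,N\}^k$ such that, with $i_{k+1}:=i_1$, for all $l,m\in\{1,\dots,k\}$: $l$ and $m$ lie in the same block of $\pi$ if and only if $(i_l,i_{l+1})\sim(i_m,i_{m+1})$. (Every index sequence belongs to $\mathcal E^{(N)}_k(\pi)$ for exactly one partition $\pi$.) *)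

(* Defs.v *)
From HB Require Import structures.
From mathcomp Require Import all_boot all_order all_algebra.
Set Implicit Arguments. Unset Strict Implicit. Unset Printing Implicit Defensive.
Import Order.TTheory GRing.Theory Num.Theory.

(* Indices {1..N} are modelled by 'I_N (0-based); {1..k} by 'I_k.
   The successor l -> l+1 with i_{k+1} := i_1 is the cyclic successor ordS. *)

Definition is_equiv (N : nat) (eqv : rel ('I_N * 'I_N)) : Prop :=
  [/\ reflexive eqv, symmetric eqv & transitive eqv].

Definition cond_C2 (N : nat) (eqv : rel ('I_N * 'I_N)) (B : rat) : Prop :=
  forall p q r : 'I_N, (#|[set s : 'I_N | eqv (p, q) (r, s)]|%:R <= B)%R.

Definition cpair (k N : nat) (i : {ffun 'I_k -> 'I_N}) (l : 'I_k) : 'I_N * 'I_N :=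
  (i l, i (ordS l)).

Definition calE (k N : nat) (eqv : rel ('I_N * 'I_N)) (P : {set {set 'I_k}})
  : {set {ffun 'I_k -> 'I_N}} :=
  [set i : {ffun 'I_k -> 'I_N} | [forall l : 'I_k, forall m : 'I_k,
     [exists A in P, (l \in A) && (m \in A)] == eqv (cpair i l) (cpair i m)]].

(* Main.v *)
Require Import Defs.
From HB Require Import structures.
From mathcomp Require Import all_boot all_order all_algebra.
From mathcomp Require Import zify ring lra.
Import Order.TTheory GRing.Theory Num.Theory.

Local Open Scope ring_scope.
Lemma card_fiber (T U : finType) (X : {set T}) (g : T -> U) (c : rat) :
  (forall y, #|[set x in X | g x == y]|%:R <= c) -> #|X|%:R <= c * #|g @: X|%:R.
Proof.
move=> H.
rewrite -sum1_card (partition_big g (mem (g @: X))) /=; last by move=> x xX; apply: imset_f.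
have E : forall y, (\sum_(x in X | g x == y) 1)%N = #|[set x in X | g x == y]|.
  by move=> y; rewrite -sum1_card; apply eq_bigl => x; rewrite inE.
under eq_bigr do rewrite E.
rewrite natr_sum (le_trans (ler_sum _ (fun y _ => H y))) //.
by rewrite sumr_const mulr_natr.
Qed.

Section S.
Variables (k N : nat) (eqv : rel ('I_N * 'I_N)) (B : rat) (P : {set {set 'I_k}}).
Local Notation E := (calE eqv P).

Definition pre (j : nat) (i : {ffun 'I_k -> 'I_N}) : {ffun 'I_k -> option 'I_N} :=
  [ffun x : 'I_k => if (x < j)%N then Some (i x) else None].

Lemma pre_agree j i i' : pre j i = pre j i' -> forall x : 'I_k, (x < j)%N -> i x = i' x.
Proof. move=> /ffunP H x lt. have := H x. rewrite !ffunE lt. by case. Qed.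

Definition gres (j : nat) (f : {ffun 'I_k -> option 'I_N}) : {ffun 'I_k -> option 'I_N} :=
  [ffun x : 'I_k => if (x < j)%N then f x else None].

Lemma gres_pre j i : gres j (pre j.+1 i) = pre j i.
Proof.
apply/ffunP => x; rewrite !ffunE; case: ifP => // lt.
by rewrite ltnS ltnW.
Qed.

Lemma step j (jo : 'I_k) (c : rat) : val jo = j -> 0 <= c ->
  (forall i0, i0 \in E -> exists S : {set 'I_N}, #|S|%:R <= c /\
     forall i, i \in E -> (forall x : 'I_k, (x < j)%N -> i x = i0 x) -> i jo \in S) ->
  #|pre j.+1 @: E|%:R <= c * #|pre j @: E|%:R.
Proof.
move=> hjo c0 Hfib.
have -> : pre j @: E = gres j @: (pre j.+1 @: E).
  rewrite -imset_comp; apply: eq_in_imset => i _ /=; by rewrite gres_pre.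
apply: card_fiber => y.
set F := [set x in _ | _].
have [->|[x0 x0F]] := set_0Vmem F; first by rewrite cards0.
move: (x0F); rewrite inE => /andP[/imsetP[i0 i0E ->] /eqP gy].
have [S [cS HS]] := Hfib i0 i0E.
apply: le_trans cS; rewrite ler_nat.
rewrite -(card_in_imset (f := fun f : {ffun 'I_k -> option 'I_N} => f jo)); last first.
  move=> x1 x2; rewrite !inE => /andP[/imsetP[i1 _ ->] /eqP g1] /andP[/imsetP[i2 _ ->] /eqP g2] e12.
  have := etrans g1 (esym g2); rewrite !gres_pre => /pre_agree ag.
  apply/ffunP => x.
  rewrite !ffunE; case: ifP => // h.
  case: (ltnP x j) => [lt|ge]; first by rewrite ag.
  have xj : x = jo by apply: val_inj; rewrite /= hjo; apply/eqP; rewrite eqn_leq -ltnS h ge.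
  rewrite xj; move: e12; rewrite !ffunE -hjo ltnSn; by case=> ->.
rewrite -(card_imset S (@Some_inj _)).
apply: subset_leq_card; apply/subsetP => z /imsetP[x xF ->].
move: xF; rewrite inE => /andP[/imsetP[i iE ->] /eqP g].
have agree : forall x : 'I_k, (x < j)%N -> i x = i0 x.
  apply: pre_agree; by rewrite -!(gres_pre j) g gy.
rewrite ffunE hjo ltnSn; apply: imset_f; exact: HS.
Qed.
Definition early (l : 'I_k) :=
  [exists m : 'I_k, (m < l)%N && [exists A in P, (m \in A) && (l \in A)]].
Definition cc (l : 'I_k) : rat := if early l then B else N%:R.

Lemma ordS_val (l : 'I_k) : (l.+1 < k)%N -> val (ordS l) = l.+1.
Proof. by move=> h; rewrite /= modn_small. Qed.

Lemma step_first j (jo : 'I_k) : val jo = j ->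
  #|pre j.+1 @: E|%:R <= N%:R * #|pre j @: E|%:R :> rat.
Proof.
move=> hjo; apply: (step _ _ _ hjo) => // i0 _.
exists [set: 'I_N]; split; first by rewrite cardsT card_ord.
by move=> *; rewrite inE.
Qed.

Lemma step_early (lo jo : 'I_k) : cond_C2 eqv B -> 0 <= B -> early lo ->
  val jo = lo.+1 ->
  #|pre lo.+2 @: E|%:R <= B * #|pre lo.+1 @: E|%:R.
Proof.
move=> C2 B0; rewrite /early => /existsP[m /andP[mlo HA]] hjo.
have lok : (lo.+1 < k)%N by rewrite -hjo ltn_ord.
apply: (step _ _ _ hjo) => // i0 i0E.
exists [set s | eqv (i0 m, i0 (ordS m)) (i0 lo, s)]; split; first exact: C2.
move=> i iE ag; rewrite inE.
move: iE; rewrite inE => /forallP/(_ m)/forallP/(_ lo); rewrite HA eq_sym => /eqP.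
rewrite /cpair => H.
have mk : (m.+1 < k)%N by apply: leq_ltn_trans lok; rewrite ltnW.
have ej : ordS lo = jo by apply: val_inj; rewrite ordS_val.
rewrite ej in H.
have a1 : i m = i0 m by apply: ag; rewrite ltnS ltnW.
have a2 : i (ordS m) = i0 (ordS m) by apply: ag; rewrite ordS_val.
have a3 : i lo = i0 lo by apply: ag.
by rewrite -a1 -a2 -a3.
Qed.

Lemma pre0 : (#|pre 0 @: E| <= 1)%N.
Proof.
rewrite -(cards1 ([ffun _ => None] : {ffun 'I_k -> option 'I_N})).
apply: subset_leq_card; apply/subsetP => f /imsetP[i _ ->]; rewrite inE.
by apply/eqP/ffunP => x; rewrite !ffunE.
Qed.

Lemma cc_ge0 l : 0 <= B -> 0 <= cc l.
Proof. by rewrite /cc; case: ifP. Qed.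

Lemma bound_pre j : cond_C2 eqv B -> 0 <= B -> (j < k)%N ->
  #|pre j.+1 @: E|%:R <= N%:R * \prod_(l : 'I_k | (l < j)%N) cc l :> rat.
Proof.
move=> C2 B0; elim: j => [|j IH] jk.
  rewrite big_pred0 // mulr1.
  apply: le_trans (@step_first 0 (Ordinal jk) erefl) _.
  rewrite -[X in _ <= X]mulr1 ler_wpM2l //.
  have := pre0; rewrite -(ler_nat rat) //.
have jk' : (j < k)%N by apply: ltnW.
pose lo := Ordinal jk'; pose jo := Ordinal jk.
rewrite (bigD1 lo) /=; last by rewrite ltnSn.
rewrite (eq_bigl (fun l : 'I_k => (l < j)%N)); last first.
  move=> l; apply/idP/idP => [/andP[a b]|h].
    have b' : (val l != j) by apply: contra b => /eqP e; apply/eqP/val_inj.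
    by rewrite ltn_neqAle b' -ltnS.
  rewrite ltnS ltnW //=; apply: contraTneq h => ->; by rewrite ltnn.
rewrite mulrCA; rewrite /cc; case Eo: (early lo).
  apply: le_trans (@step_early lo jo C2 B0 Eo erefl) _.
  by rewrite ler_wpM2l // IH.
apply: le_trans (@step_first j.+1 jo erefl) _.
by rewrite ler_wpM2l // IH.
Qed.

Lemma cardE_le : cond_C2 eqv B -> 0 <= B -> (0 < k)%N ->
  #|E|%:R <= N%:R * \prod_(l : 'I_k | (l < k.-1)%N) cc l :> rat.
Proof.
move=> C2 B0 k0.
have := @bound_pre k.-1 C2 B0; rewrite prednK //; move/(_ (leqnn _)).
rewrite card_in_imset //.
move=> i i' _ _ /pre_agree ag; apply/ffunP => x; apply: ag; exact: ltn_ord.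
Qed.
Lemma card_lt m : (m <= k)%N -> #|[pred l : 'I_k | (l < m)%N]| = m.
Proof.
move=> mk.
have inj : injective (widen_ord mk) by move=> a b e; apply: val_inj; exact: (congr1 val e).
rewrite -[RHS](card_ord m) -(card_imset predT inj).
apply: eq_card => l; rewrite !inE; apply/idP/imsetP => [lm|[x _ ->]].
  by exists (Ordinal lm) => //; apply: val_inj.
by rewrite /= ltn_ord.
Qed.

Definition pa := [pred l : 'I_k | (l < k.-1)%N && early l].
Definition pf := [pred l : 'I_k | (l < k.-1)%N && ~~ early l].

Lemma prod_split : \prod_(l : 'I_k | (l < k.-1)%N) cc l = B ^+ #|pa| * N%:R ^+ #|pf|.
Proof.
rewrite (bigID early) /=.
rewrite (eq_bigr (fun _ => B)); last by move=> l /andP[_ e]; rewrite /cc e.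
rewrite [X in _ * X](eq_bigr (fun _ => N%:R)); last by move=> l /andP[_ e]; rewrite /cc (negbTE e).
by rewrite -!prodr_const.
Qed.

Lemma card_af : (0 < k)%N -> (#|pa| + #|pf| = k.-1)%N.
Proof.
move=> k0; rewrite -(@card_lt k.-1 (leq_pred k)) -[in RHS](cardID early).
congr addn; apply: eq_card => l; rewrite !inE /pa /pf /=; first [done | by rewrite andbC].
Qed.

Lemma card_first : partition P [set: 'I_k] -> (#|pf| <= #|P|)%N.
Proof.
case/and3P => /eqP cP _ _.
have inP : forall l, pblock P l \in P by move=> l; apply: pblock_mem; rewrite cP inE.
have inB : forall l, l \in pblock P l by move=> l; rewrite mem_pblock cP inE.
have -> : #|pf| = #|[set pblock P l | l in pf]|.
  apply/esym/card_in_imset => l1 l2; rewrite !inE => /andP[_ e1] /andP[_ e2] eq.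
  have H : forall x y : 'I_k, (x < y)%N -> pblock P x = pblock P y -> early y.
    move=> x y xy exy; apply/existsP; exists x; rewrite xy /=.
    by apply/existsP; exists (pblock P x); rewrite inP inB exy inB.
  case: (ltngtP l1 l2) => [lt|gt|eq12]; last exact: val_inj.
  - by rewrite (H _ _ lt eq) in e2.
  - by rewrite (H _ _ gt (esym eq)) in e1.
apply: subset_leq_card; apply/subsetP => A /imsetP[l _ ->]; exact: inP.
Qed.
Lemma final : (2 <= k)%N -> is_equiv eqv -> cond_C2 eqv B -> B <= N%:R ->
  partition P [set: 'I_k] ->
  #|E|%:R <= N%:R ^+ (#|P|.+1) * B ^ (k%:Z - #|P|%:Z - 1) :> rat.
Proof.
move=> k2 [rfl _ _] C2 BN partP.
have k0 : (0 < k)%N by apply: leq_trans k2.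
have [N0|Npos] := posnP N.
  have -> : #|E| = 0%N.
    apply/eqP; rewrite -leqn0; apply: leq_trans (subset_leq_card (subsetT E)) _.
    by rewrite cardsT card_ffun !card_ord N0 exp0n.
  by rewrite N0 expr0n /= mul0r.
pose x0 : 'I_N := Ordinal Npos.
have B1 : 1 <= B.
  apply: le_trans (C2 x0 x0 x0); rewrite ler1n card_gt0; apply/set0Pn; exists x0.
  by rewrite inE rfl.
have B0 : 0 < B by apply: lt_le_trans B1; rewrite ltr01.
apply: le_trans (cardE_le C2 (ltW B0) k0) _.
rewrite prod_split.
have af := card_af k0; have fr := card_first partP.
move: af fr; set a := #|pa|; set f := #|pf|; set r := #|P| => af fr.
have kk : k = (a + f).+1 by rewrite af prednK.
have rfd : r = (f + (r - f))%N by rewrite subnKC.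
set d := (r - f)%N in rfd.
have ez : (k%:Z - r%:Z - 1) = a%:Z - d%:Z by rewrite kk rfd; lia.
rewrite ez expfzDr ?gt_eqF // -exprnP -exprnN rfd exprS exprD.
have -> : N%:R * (N%:R ^+ f * N%:R ^+ d) * (B ^+ a * B ^- d) =
   (N%:R * (B ^+ a * N%:R ^+ f)) * (N%:R ^+ d / B ^+ d) :> rat.
  by rewrite /GRing.exp /=; ring.
apply: ler_peMr; first by rewrite !mulr_ge0 // exprn_ge0 // ltW.
rewrite ler_pdivlMr ?exprn_gt0 // mul1r lerXn2r // ?qualifE ?ltW //.
  exact: ltW B0.
exact: ler0n.
Qed.
End S.

Theorem mainTheorem4 (k N : nat) (eqv : rel ('I_N * 'I_N)) (B : rat)
  (P : {set {set 'I_k}}) :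
  (2 <= k)%N ->
  is_equiv eqv ->
  cond_C2 eqv B ->
  (B <= N%:R)%R ->
  partition P [set: 'I_k] ->
  (#|calE eqv P|%:R <=
     N%:R ^+ (#|P|.+1) * B ^ (k%:Z - #|P|%:Z - 1) :> rat)%R.
Proof. exact: final. Qed.
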